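(* Let $m\ge 2$ be a non-prime integer and $n=2^m-1$. Then there is no monomial power permutation $F(x)=x^t$ of $GF(2^m)$ for which the self-embedding $S\cup F(S)$ lies in a closed surface, where $S=STS(\mathcal H^n)$.
   Context: A monomial power permutation is $F(x)=x^t$ with $\gcd(t,n)=1$. $S=STS(\mathcal H^n)$ is the set of 3-subsets $\{a,b,c\}$ of nonzero elements of $GF(2^m)$ with $a+b+c=0$; $F(S)=\{\{F(a),F(b),F(c)\}:\{a,b,c\}\in S\}$. For nonzero $a$, let $P_a=GF(2^m)\setminus\{0,a\}$, $s_a(y)=a+y$, $\psi_a(y)=F(F^{-1}(a)+F^{-1}(y))$; the rotation lines at $a$ are the orbits on $P_a$ of the group generated by $s_a,\psi_a$, and $rl(a)$ is their number. $S\cup F(S)$ lies in a closed surface iff $rl(a)=1$ for all nonzero $a$ (equivalently: for every nonzero $a$ and every $a_1\in P_a$, the elements $a_1,\dots,a_{2^{m-1}-1}$ with $a_{i+1}=F(F^{-1}(a)+F^{-1}(a+a_i))$ are pairwise distinct). *)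

(* Defs.v *)
From HB Require Import structures.
From mathcomp Require Import all_boot all_order all_algebra all_field.
Set Implicit Arguments. Unset Strict Implicit. Unset Printing Implicit Defensive.
Import GRing.Theory.
Local Open Scope ring_scope.

Section RotationLines.
Variable (K : finFieldType) (t : nat).

Definition Fmon (x : K) : K := x ^+ t.

(* Its inverse F^{-1} (a genuine inverse when F is a permutation of K). *)
Definition Finv (y : K) : K := odflt 0 [pick x : K | Fmon x == y].

Definition Pa (a : K) : {set K} := [set y : K | (y != 0) && (y != a)].

Definition s_a (a y : K) : K := a + y.

Definition psi_a (a y : K) : K := Fmon (Finv a + Finv y).

(* One-step relation of the group <s_a, psi_a> acting on P_a
   (both generators are involutions, so orbits = connected components). *)
Definition rl_step (a : K) : rel K :=
  fun x y => [&& x \in Pa a, y \in Pa a & (y == s_a a x) || (y == psi_a a x)].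

Definition rot_line (a x : K) : {set K} := [set y in Pa a | connect (rl_step a) x y].

Definition rl (a : K) : nat := #|[set rot_line a x | x in Pa a]|.

(* S ∪ F(S) lies in a closed surface iff rl(a) = 1 for every nonzero a. *)
Definition closed_surface_embedding : Prop := forall a : K, a != 0 -> rl a = 1%N.

End RotationLines.

(* Main.v *)
Require Import Defs.
From HB Require Import structures.
From mathcomp Require Import all_boot all_order all_algebra all_field.
Set Implicit Arguments. Unset Strict Implicit. Unset Printing Implicit Defensive.
Import GRing.Theory.
Local Open Scope ring_scope.

Section S.
Variable K : finFieldType.

Lemma exists_nonroot (n : nat) : (0 < n)%N -> (n < #|K| - 1)%N ->
  exists x : K, (x != 0) && (x ^+ n != 1).
Proof.
move=> n0 nlt; case: (boolP [exists x : K, (x != 0) && (x ^+ n != 1)]) => [/existsP//|/existsPn H]; exfalso.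
have := @max_unity_roots K n (enum [pred x : K | x != 0]) n0.
have -> : all n.-unity_root (enum [pred x : K | x != 0]).
  apply/allP=> x; rewrite mem_enum inE => xn0.
  have := H x; rewrite xn0 /= negbK => /eqP e.
  by rewrite unity_rootE e.
rewrite enum_uniq -cardE => /(_ isT isT).
have -> : #|[pred x : K | x != 0]| = (#|K| - 1)%N.
  rewrite subn1 -(cardC1 (0:K)); apply: eq_card => x; by rewrite !inE.
by rewrite leqNgt nlt.
Qed.

Lemma expf_card1 (x : K) : x != 0 -> x ^+ (#|K| - 1) = 1.
Proof.
move=> x0; apply: (mulIf x0); rewrite mul1r -exprSr subn1 prednK ?expf_card //.
by apply/card_gt0P; exists x.
Qed.
End S.

Section Main.
Variables (K : finFieldType) (t km d : nat).
Hypothesis Hinv : forall x : K, x ^+ (t * km) = x.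
Hypothesis ch2 : (2 \in [pchar K])%N.

Lemma FFinv (y : K) : Fmon t (Finv t y) = y.
Proof.
rewrite /Finv; case: pickP => [x /eqP // | H].
by have := H (y ^+ km); rewrite /Fmon -exprM mulnC Hinv eqxx.
Qed.

Lemma Finj : injective (Fmon t : K -> K).
Proof. by move=> x y e; rewrite -(Hinv x) -(Hinv y) !exprM -/(Fmon t x) e. Qed.

Lemma FinvF (x : K) : Finv t (Fmon t x) = x.
Proof. by apply: Finj; rewrite FFinv. Qed.

Definition inL (x : K) := x ^+ (2 ^ d) == x.

Lemma frobD (x y : K) : (x + y) ^+ (2 ^ d) = x ^+ (2 ^ d) + y ^+ (2 ^ d).
Proof.
apply: exprDn_pchar.
by rewrite (eq_pnat _ (pcharf_eq ch2)) pnatX pnat_id.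
Qed.

Lemma inLD x y : inL x -> inL y -> inL (x + y).
Proof. by rewrite /inL frobD => /eqP -> /eqP ->. Qed.

Lemma inL1 : inL 1.
Proof. by rewrite /inL expr1n. Qed.

Lemma inLF x : inL x -> inL (Fmon t x).
Proof. by rewrite /inL /Fmon -exprM mulnC exprM => /eqP ->. Qed.

Lemma inLFinv y : inL y -> inL (Finv t y).
Proof.
move=> Ly; rewrite /inL; apply/eqP/Finj.
rewrite [LHS]/Fmon -exprM mulnC exprM; have := FFinv y; rewrite /Fmon => ->.
exact/eqP.
Qed.

Lemma step_inL x y : inL x -> rl_step t 1 x y -> inL y.
Proof.
move=> Lx /and3P [_ _ /orP [] /eqP ->].
  by rewrite /s_a; apply: inLD => //; exact: inL1.
by rewrite /psi_a; apply/inLF/inLD; apply: inLFinv => //; exact: inL1.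
Qed.

Lemma connect_inL x y : inL x -> connect (rl_step t 1) x y -> inL y.
Proof.
move=> Lx /connectP [p Hp ->]; elim: p x Lx Hp => //= z p IH x Lx /andP [sxz Hp].
exact: (IH z (step_inL Lx sxz) Hp).
Qed.

Lemma not_closed (h y : K) : inL h -> h != 0 -> h != 1 -> ~~ inL y ->
  ~ closed_surface_embedding K t.
Proof.
move=> Lh h0 h1 Ly Hc.
have y0 : y != 0 by apply: contraNneq Ly => ->; rewrite /inL expr0n expn_eq0.
have y1 : y != 1 by apply: contraNneq Ly => ->; exact: inL1.
have := Hc 1 (oner_neq0 K); rewrite /rl => /eqP /cards1P [S HS].
have hP : h \in Pa 1 by rewrite inE h0 h1.
have yP : y \in Pa 1 by rewrite inE y0 y1.
have : rot_line t 1 h \in [set rot_line t 1 x | x in Pa 1] by apply: imset_f.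
have : rot_line t 1 y \in [set rot_line t 1 x | x in Pa 1] by apply: imset_f.
rewrite HS !inE => /eqP e1 /eqP e2.
have : y \in rot_line t 1 y by rewrite inE yP connect0.
rewrite e1 -e2 inE => /andP [_ /(connect_inL Lh)]; exact/negP.
Qed.

End Main.

From mathcomp Require Import zify.

Theorem mainTheorem8 (m : nat) (K : finFieldType) :
  (2 <= m)%N -> ~~ prime m -> #|K| = (2 ^ m)%N ->
  forall t : nat, coprime t (2 ^ m - 1) ->
  ~ closed_surface_embedding K t.
Proof.
move=> m2 npm cK t cop.
set n := (2 ^ m - 1)%N in cop.
have m4 : (4 <= 2 ^ m)%N by rewrite (_ : 4 = 2 ^ 2)%N // leq_exp2l.
have cK1 : (#|K| - 1)%N = n by rewrite cK.
have t0 : (0 < t)%N.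
  case: t cop => // ; rewrite /coprime gcd0n => /eqP; rewrite /n; lia.
have ch2 : (2 \in [pchar K])%N by apply: (card_finPcharP cK).
case: (egcdnP n t0) => km kn Hk _.
have gcd1 : gcdn t n = 1%N by apply/eqP.
have e : (t * km = (n * kn).+1)%N by rewrite mulnC Hk gcd1 addn1 mulnC.
have Hinv : forall x : K, x ^+ (t * km) = x.
  move=> x; rewrite e exprS exprM; have [->|x0] := eqVneq x 0; first by rewrite mul0r.
  by rewrite -cK1 expf_card1 // expr1n mulr1.
set d := pdiv m.
have pd : prime d by apply: pdiv_prime; lia.
have dm : (d %| m)%N by apply: pdiv_dvd.
have d2 : (2 <= d)%N by apply: prime_gt1.
have dltm : (d < m)%N.
  have dlem : (d <= m)%N by apply: dvdn_leq => //; lia.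
  rewrite ltn_neqAle dlem andbT.
  by apply: contraNneq npm => <-.
set q := (2 ^ d).-1.
have d4 : (4 <= 2 ^ d)%N by rewrite (_ : 4 = 2 ^ 2)%N // leq_exp2l.
have dlt : (2 ^ d < 2 ^ m)%N by rewrite ltn_exp2l // dltm.
have qdiv : (q %| n)%N.
  have := dvdn_pred_predX (2 ^ d) (m %/ d).
  by rewrite -expnM mulnC divnK // /n subn1.
set k := (n %/ q)%N.
have Hqk : (k * q = n)%N by rewrite divnK.
have [x /andP [x0 xk]] : exists x : K, (x != 0) && (x ^+ k != 1).
  apply: exists_nonroot; rewrite ?cK1; rewrite /q /n in Hqk *; nia.
have [y /andP [y0 yq]] : exists y : K, (y != 0) && (y ^+ q != 1).
  apply: exists_nonroot; rewrite ?cK1 /q /n; lia.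
have e2 : (2 ^ d = q.+1)%N by rewrite /q prednK ?expn_gt0.
apply: (@not_closed K t km d Hinv ch2 (x ^+ k) y).
- by rewrite /inL e2 exprSr -exprM Hqk -cK1 expf_card1 // mul1r eqxx.
- by rewrite expf_neq0.
- exact: xk.
- rewrite /inL e2 exprSr.
  apply: contra yq => /eqP H; apply/eqP; apply: (mulIf y0); by rewrite mul1r.
Qed.
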